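(* Let $\Gamma=(V,E)$ be a graph, let $M_v$ ($v\in V$) be monoids and $M=\Gamma_{v\in V}M_v$. Then for each vertex $v$, each element of $M$ has exactly one final $v$-component and exactly one final $v$-complement.
   Context: A graph $\Gamma=(V,E)$ has vertex set $V$ and irreflexive symmetric edge relation $E$. The graph product $M=\Gamma_{v\in V}M_v$ of pairwise disjoint monoids $M_v$ is the quotient of their free product by the congruence generated by $(mn,nm)$ for $m\in M_u$, $n\in M_v$, $(u,v)\in E$; each $M_v$ is identified with its (isomorphic) image in $M$. Let $X$ be the disjoint union of the sets $M_v\setminus\{1\}$, and for $m\in M_v\setminus\{1\}$ set $C(m)=v$. A word $x_1\circ\cdots\circ x_n$ in the free monoid $X^*$ is an expression for the element $x_1x_2\cdots x_n$ of $M$. It is reduced if whenever $i<j$ and $C(x_i)=C(x_j)$ there is $k$ with $i<k<j$ and $(C(x_i),C(x_k))\notin E$. For $a,a'\in M$, $v\in V$ and $c\in M_v\setminus\{1\}$: $a$ has final $v$-component $c$ and final $v$-complement $a'$ if $a$ has a reduced expression $a_1\circ\cdots\circ a_m\circ c$ with $a_1\cdots a_m=a'$. Also, $a$ has final $v$-component $1$ and final $v$-complement $a$ if $a$ has a reduced expression $a_1\circ\cdots\circ a_m$ such that either (i) $C(a_j)\ne v$ for all $j$, or (ii) there is $k$ with $(C(a_k),v)\notin E$ and $C(a_j)\neq v$ for all $j\ge k$. *)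

(* Defs.v *)
From Stdlib Require Import List.
Import ListNotations.
Set Implicit Arguments.
Unset Strict Implicit.

Record monoid := Monoid {
  mcarrier :> Type;
  mone : mcarrier;
  mmul : mcarrier -> mcarrier -> mcarrier;
  mmulA : forall x y z, mmul x (mmul y z) = mmul (mmul x y) z;
  mmul1m : forall x, mmul mone x = x;
  mmulm1 : forall x, mmul x mone = x
}.

Section GraphProduct.
Variables (V : Type) (E : V -> V -> Prop) (M : V -> monoid).

Definition letter := {v : V & M v}.

Inductive gp_rel : list letter -> list letter -> Prop :=
| gp_rel_one v : gp_rel [existT _ v (mone (M v))] []
| gp_rel_mul v (m n : M v) :
    gp_rel [existT _ v m; existT _ v n] [existT _ v (mmul m n)]
| gp_rel_comm u v (m : M u) (n : M v) :
    E u v -> gp_rel [existT _ u m; existT _ v n] [existT _ v n; existT _ u m].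

Inductive gp_cong : list letter -> list letter -> Prop :=
| gp_cong_step p s l r : gp_rel l r -> gp_cong (p ++ l ++ s) (p ++ r ++ s)
| gp_cong_refl w : gp_cong w w
| gp_cong_sym w1 w2 : gp_cong w1 w2 -> gp_cong w2 w1
| gp_cong_trans w1 w2 w3 : gp_cong w1 w2 -> gp_cong w2 w3 -> gp_cong w1 w3.

Definition GP := {P : list letter -> Prop | exists w, P = gp_cong w}.

Definition gp_class (w : list letter) : GP :=
  exist _ (gp_cong w) (ex_intro _ w eq_refl).

Definition X := {v : V & {m : M v | m <> mone (M v)}}.
Definition C (x : X) : V := projT1 x.
Definition X_letter (x : X) : letter := existT _ (projT1 x) (proj1_sig (projT2 x)).

Definition eval (w : list X) : GP := gp_class (map X_letter w).

Definition reduced (w : list X) : Prop :=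
  forall p x q y r, w = p ++ x :: q ++ y :: r -> C x = C y ->
    exists q1 z q2, q = q1 ++ z :: q2 /\ ~ E (C x) (C z).

(* [final v a c a'] : a has final v-component c and final v-complement a'. *)
Definition final (v : V) (a : GP) (c : M v) (a' : GP) : Prop :=
  (exists (h : c <> mone (M v)) (w : list X),
      reduced (w ++ [existT _ v (exist _ c h)]) /\
      eval (w ++ [existT _ v (exist _ c h)]) = a /\ eval w = a')
  \/
  (c = mone (M v) /\ a' = a /\
   exists w : list X, reduced w /\ eval w = a /\
     ((forall x, In x w -> C x <> v) \/
      (exists p z s, w = p ++ z :: s /\ ~ E (C z) v /\
                     forall x, In x (z :: s) -> C x <> v))).

End GraphProduct.

(* Main.v *)
Require Import Defs.
From Stdlib Require Import List Classical Eqdep ProofIrrelevance FunctionalExtensionality PropExtensionality.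
Import ListNotations.

Section Dev.
Variables (V : Type) (E : V -> V -> Prop) (M : V -> monoid).
Hypothesis E_sym : forall u v, E u v -> E v u.
Hypothesis E_irr : forall v, ~ E v v.

Notation Xt := (X M).
Notation word := (list (X M)).

Definition badV (l : list V) := exists p a q r, l = p ++ a :: q ++ a :: r /\ Forall (E a) q.

Lemma reduced_badV (w : word) : reduced E w <-> ~ badV (map (@C V M) w).
Proof.
  split.
  - intros Hr [p [a [q [r [Heq HF]]]]].
    apply map_eq_app in Heq as [p' [l2 [-> [_ H2]]]].
    apply map_eq_cons in H2 as [x [tl [-> [Hx H3]]]].
    apply map_eq_app in H3 as [q' [l3 [-> [Hq H4]]]].
    apply map_eq_cons in H4 as [y [r' [-> [Hy _]]]].
    destruct (Hr p' x q' y r' eq_refl) as [q1 [z [q2 [-> Hz]]]]; [congruence|].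
    apply Hz. subst. rewrite Forall_forall in HF. apply HF.
    rewrite map_app. apply in_or_app. right. simpl. auto.
  - intros Hb p x q y r Heq Hxy.
    destruct (classic (exists z, In z q /\ ~ E (C x) (C z))) as [[z [Hz Hn]]|Hn].
    + apply in_split in Hz as [q1 [q2 ->]]. eauto.
    + exfalso. apply Hb. exists (map (@C V M) p), (C x), (map (@C V M) q), (map (@C V M) r).
      split.
      * subst w. rewrite !map_app. simpl. rewrite map_app. simpl. rewrite Hxy. reflexivity.
      * rewrite Forall_forall. intros b Hb'. apply in_map_iff in Hb' as [z [<- Hz]].
        apply NNPP. intro. apply Hn. eauto.
Qed.

Definition finV u (l : list V) := exists p s, l = p ++ u :: s /\ Forall (fun a => E a u) s.

Lemma Forall_sym u (s : list V) : Forall (fun a => E a u) s -> Forall (E u) s.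
Proof. intro H. eapply Forall_impl; [|exact H]. simpl. auto. Qed.

Lemma R5V l u : ~ badV (l ++ [u]) -> ~ finV u l.
Proof.
  intros Hb [p [s [-> Hs]]]. apply Hb. exists p, u, s, [].
  split; [rewrite <- app_assoc; reflexivity | apply Forall_sym; auto].
Qed.

Lemma prefixV l1 l2 : ~ badV (l1 ++ l2) -> ~ badV l1.
Proof.
  intros Hb [p [a [q [r [-> H]]]]]. apply Hb. exists p, a, q, (r ++ l2).
  split; auto. rewrite <- !app_assoc. simpl. rewrite <- app_assoc. reflexivity.
Qed.

Lemma R2V l u : ~ badV l -> ~ finV u l -> ~ badV (l ++ [u]).
Proof.
  intros Hb Hf [p [a [q [r [Heq H]]]]].
  destruct r as [|b r' _] using rev_ind.
  - assert (Heq' : l ++ [u] = (p ++ a :: q) ++ [a]) by (rewrite Heq, <- app_assoc; reflexivity).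
    apply app_inj_tail in Heq' as [-> <-]. apply Hf. exists p, q. split; auto.
    eapply Forall_impl; [|exact H]. simpl. auto.
  - assert (Heq' : l ++ [u] = (p ++ a :: q ++ a :: r') ++ [b]).
    { rewrite Heq. rewrite <- !app_assoc. simpl. rewrite <- !app_assoc. reflexivity. }
    apply app_inj_tail in Heq' as [-> _]. apply Hb. exists p, a, q, r'. auto.
Qed.

Lemma R4V p u s : ~ badV (p ++ u :: s) -> Forall (fun a => E a u) s ->
  ~ badV (p ++ s) /\ ~ finV u (p ++ s).
Proof.
  intros Hb Hs. split.
  - intros [p1 [a [q [r [Heq Hq]]]]].
    apply app_eq_app in Heq as [l [[Hp Hl]|[Hp Hl]]].
    + destruct l as [|a' l'].
      * simpl in Hl. subst. rewrite app_nil_r in Hb. apply Hb. exists (p1 ++ [u]), a, q, r.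
        split; auto. rewrite <- app_assoc. reflexivity.
      * simpl in Hl. injection Hl as <- Hl.
        apply app_eq_app in Hl as [l2 [[Hq1 Hl2]|[Hq1 Hl2]]].
        --
           subst. apply Hb. exists p1, a, (l' ++ u :: l2), r. split.
           ++ repeat (rewrite <- app_assoc; simpl). reflexivity.
           ++ apply Forall_app in Hq as [H1 H2]. apply Forall_app. split; auto.
              constructor; auto.
              apply Forall_app in Hs as [_ Hs']. exact (Forall_inv Hs').
        -- destruct l2 as [|b l3].
           ++ simpl in Hl2. rewrite app_nil_r in Hq1. subst. apply Hb.
              exists p1, a, (q ++ [u]), r. split.
              ** rewrite <- !app_assoc. reflexivity.
              ** apply Forall_app. split; auto. constructor; auto.
                 exact (Forall_inv Hs).
           ++ simpl in Hl2. injection Hl2 as <- Hl3. subst. apply Hb.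
              exists p1, a, q, (l3 ++ u :: s). split; auto.
              rewrite <- !app_assoc. simpl. rewrite <- !app_assoc. reflexivity.
    + subst. apply Hb. exists (p ++ u :: l), a, q, r. split; auto.
      rewrite <- app_assoc. reflexivity.
  - intros [p' [s' [Heq Hs']]].
    apply app_eq_app in Heq as [l [[Hp Hl]|[Hp Hl]]].
    +
      destruct l as [|b l'].
      * simpl in Hl. subst. apply (E_irr u). exact (Forall_inv Hs).
      * simpl in Hl. injection Hl as <- Hl. subst. apply Hb.
        exists p', u, l', s. split.
        -- rewrite <- app_assoc. reflexivity.
        -- apply Forall_sym. apply Forall_app in Hs' as [H1 _]. exact H1.
    + subst. rewrite Forall_forall in Hs. apply (E_irr u). apply Hs. apply in_or_app. right. simpl. auto.
Qed.

Definition FS u (w p : word) (x : Xt) s :=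
  w = p ++ x :: s /\ C x = u /\ Forall (fun y => E (C y) u) s.
Definition noFS u (w : word) := forall p x s, ~ FS u w p x s.

Lemma FS_finV u w : (exists p x s, FS u w p x s) <-> finV u (map (@C V M) w).
Proof.
  split.
  - intros [p [x [s [-> [Hx Hs]]]]]. exists (map (@C V M) p), (map (@C V M) s).
    rewrite map_app. simpl. rewrite Hx. split; auto. apply Forall_map. exact Hs.
  - intros [p [s [Heq Hs]]].
    apply map_eq_app in Heq as [p' [l2 [-> [Hp H2]]]].
    apply map_eq_cons in H2 as [x [s' [-> [Hx Hs']]]].
    exists p', x, s'. split; auto. split; auto. subst s. apply Forall_map in Hs. exact Hs.
Qed.

Lemma FS_uniq u w p x s p' x' s' : FS u w p x s -> FS u w p' x' s' ->
  p = p' /\ x = x' /\ s = s'.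
Proof.
  intros [-> [Hx Hs]] [Heq [Hx' Hs']].
  apply app_eq_app in Heq as [l [[Hp Hl]|[Hp Hl]]].
  - destruct l as [|y l'].
    + rewrite app_nil_r in Hp. simpl in Hl. injection Hl as <- <-. auto.
    + simpl in Hl. injection Hl as <- ->. exfalso. rewrite Forall_forall in Hs'.
      apply (E_irr u). rewrite <- Hx at 1. apply Hs'. apply in_or_app. right. simpl. auto.
  - destruct l as [|y l'].
    + rewrite app_nil_r in Hp. simpl in Hl. injection Hl as <- <-. auto.
    + simpl in Hl. injection Hl as <- ->. exfalso. rewrite Forall_forall in Hs.
      apply (E_irr u). rewrite <- Hx' at 1. apply Hs. apply in_or_app. right. simpl. auto.
Qed.

Inductive sw1 : word -> word -> Prop :=
| sw1_i a y z b : E (C y) (C z) -> sw1 (a ++ y :: z :: b) (a ++ z :: y :: b).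

Inductive shuf : word -> word -> Prop :=
| sh_refl w : shuf w w
| sh_step w1 w2 w3 : sw1 w1 w2 -> shuf w2 w3 -> shuf w1 w3.

Lemma sw1_sym w1 w2 : sw1 w1 w2 -> sw1 w2 w1.
Proof. intros []. constructor. auto. Qed.

Lemma shuf_trans w1 w2 w3 : shuf w1 w2 -> shuf w2 w3 -> shuf w1 w3.
Proof. induction 1; eauto using shuf. Qed.

Lemma sw1_shuf w1 w2 : sw1 w1 w2 -> shuf w1 w2.
Proof. eauto using shuf. Qed.

Lemma shuf_sym w1 w2 : shuf w1 w2 -> shuf w2 w1.
Proof.
  induction 1. constructor. eapply shuf_trans; [exact IHshuf|].
  apply sw1_shuf, sw1_sym; auto.
Qed.

Lemma sw1_app_r w1 w2 t : sw1 w1 w2 -> sw1 (w1 ++ t) (w2 ++ t).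
Proof. intros []. rewrite <- !app_assoc. simpl. constructor. auto. Qed.

Lemma sw1_app_l w1 w2 t : sw1 w1 w2 -> sw1 (t ++ w1) (t ++ w2).
Proof. intros []. rewrite !app_assoc. constructor. auto. Qed.

Lemma shuf_app_r w1 w2 t : shuf w1 w2 -> shuf (w1 ++ t) (w2 ++ t).
Proof. induction 1; eauto using shuf, sw1_app_r. Qed.

Lemma shuf_app_l w1 w2 t : shuf w1 w2 -> shuf (t ++ w1) (t ++ w2).
Proof. induction 1; eauto using shuf, sw1_app_l. Qed.

Lemma move_right p x s : Forall (fun y => E (C y) (C x)) s ->
  shuf (p ++ x :: s) (p ++ s ++ [x]).
Proof.
  revert p. induction s as [|y s IH]; intros p Hs.
  - constructor.
  - inversion Hs; subst. eapply sh_step.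
    + constructor. apply E_sym. eassumption.
    + replace (p ++ (y :: s) ++ [x]) with ((p ++ [y]) ++ s ++ [x]) by (rewrite <- app_assoc; reflexivity).
      replace (p ++ y :: x :: s) with ((p ++ [y]) ++ x :: s) by (rewrite <- app_assoc; reflexivity).
      apply IH. auto.
Qed.

Lemma sw1_FS u w1 w2 p x s : sw1 w1 w2 -> FS u w1 p x s ->
  exists p' s', FS u w2 p' x s' /\ shuf (p ++ s) (p' ++ s') /\
    forall x', C x' = u -> shuf (p ++ x' :: s) (p' ++ x' :: s').
Proof.
  intros [a y z b Hyz] [Heq [Hx Hs]].
  apply app_eq_app in Heq as [l [[Ha Hl]|[Hp Hl]]].
  -
    destruct l as [|x0 l'].
    + rewrite app_nil_r in Ha. subst a. simpl in Hl. injection Hl as -> ->.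
      exists (p ++ [z]), b. inversion Hs; subst. split; [|split].
      * split; [rewrite <- app_assoc; reflexivity|]. auto.
      * rewrite <- app_assoc. constructor.
      * intros x' Hx'. rewrite <- app_assoc. simpl. apply sw1_shuf.
        constructor. rewrite Hx'. auto.
    + simpl in Hl. injection Hl as -> ->. subst a.
      exists p, (l' ++ z :: y :: b). split; [|split].
      * split; [rewrite <- app_assoc; reflexivity|]. split; auto.
        apply Forall_app in Hs as [H1 H2]. inversion H2; subst. inversion H4; subst.
        apply Forall_app. split; auto.
      * rewrite !app_assoc. apply sw1_shuf. constructor. auto.
      * intros x' Hx'. replace (p ++ x' :: l' ++ y :: z :: b) with ((p ++ x' :: l') ++ y :: z :: b)
          by (rewrite <- app_assoc; reflexivity).
        replace (p ++ x' :: l' ++ z :: y :: b) with ((p ++ x' :: l') ++ z :: y :: b)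
          by (rewrite <- app_assoc; reflexivity).
        apply sw1_shuf. constructor. auto.
  -
    destruct l as [|y0 l'].
    + rewrite app_nil_r in Hp. subst p. simpl in Hl. injection Hl as <- <-.
      exists (a ++ [z]), b. inversion Hs; subst. split; [|split].
      * split; [rewrite <- app_assoc; reflexivity|]. auto.
      * rewrite <- app_assoc. constructor.
      * intros x' Hx'. rewrite <- app_assoc. simpl. apply sw1_shuf.
        constructor. rewrite Hx'. auto.
    + simpl in Hl. injection Hl as <- Hl. destruct l' as [|z0 l''].
      * simpl in Hl. injection Hl as <- <-. subst p.
        exists a, (y :: b). split; [|split].
        -- split; [reflexivity|]. split; auto. constructor; auto. subst u. auto.
        -- rewrite <- app_assoc. constructor.
        -- intros x' Hx'. rewrite <- app_assoc. simpl. apply sw1_shuf.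
           constructor. rewrite Hx'. subst u. apply E_sym. auto.
      * simpl in Hl. injection Hl as <- ->. subst p.
        exists (a ++ z :: y :: l''), s. split; [|split].
        -- split; [rewrite <- app_assoc; reflexivity|]. auto.
        -- rewrite <- !app_assoc. simpl. apply sw1_shuf. constructor. auto.
        -- intros x' Hx'. rewrite <- !app_assoc. simpl. apply sw1_shuf. constructor. auto.
Qed.

Lemma sw1_noFS u w1 w2 : sw1 w1 w2 -> noFS u w1 -> noFS u w2.
Proof.
  intros Hsw Hn p x s Hf. apply sw1_sym in Hsw.
  destruct (sw1_FS _ _ _ _ _ _ Hsw Hf) as [p' [s' [Hf' _]]]. eapply Hn; eauto.
Qed.

Definition mkX (u : V) (c : M u) (h : c <> mone (M u)) : Xt := existT _ u (exist _ c h).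

Lemma mkX_eq u c c' h h' : c = c' -> mkX u c h = mkX u c' h'.
Proof. intros ->. f_equal. apply proof_irrelevance. Qed.

Lemma mkX_inj u c c' h h' : mkX u c h = mkX u c' h' -> c = c'.
Proof.
  unfold mkX. intro H. apply inj_pair2 in H. apply (f_equal (@proj1_sig _ _)) in H. exact H.
Qed.

Lemma X_destr (x : Xt) : exists c h, x = mkX (C x) c h.
Proof. destruct x as [u [c h]]. exists c, h. reflexivity. Qed.

Definition slot u (m : M u) (x : Xt) (T : word) :=
  exists c hc, x = mkX u c hc /\
   ((exists h, T = [mkX u (mmul c m) h]) \/ (mmul c m = mone (M u) /\ T = [])).

Definition StepRel (w : word) (l : letter M) (r : word) : Prop :=
  match l with existT _ u m =>
   (m = mone (M u) /\ r = w) \/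
   (m <> mone (M u) /\ exists p x s T, FS u w p x s /\ slot u m x T /\ r = p ++ T ++ s) \/
   (m <> mone (M u) /\ noFS u w /\ exists h, r = w ++ [mkX u m h])
  end.

Lemma slot_ex u m x : C x = u -> exists T, slot u m x T.
Proof.
  intros Hx. destruct x as [u' [c h]]. unfold C in Hx. simpl in Hx. subst u'.
  destruct (classic (mmul c m = mone (M u))) as [H|H].
  - exists []. exists c, h. split; auto.
  - exists [mkX u _ H]. exists c, h. split; eauto.
Qed.

Lemma slot_det u m x T T' : slot u m x T -> slot u m x T' -> T = T'.
Proof.
  intros [c [hc [-> H1]]] [c' [hc' [Heq H2]]]. apply mkX_inj in Heq. subst c'.
  destruct H1 as [[h1 ->]|[e1 ->]]; destruct H2 as [[h2 ->]|[e2 ->]]; try reflexivity.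
  all: first [contradiction | f_equal; apply mkX_eq; reflexivity].
Qed.

Lemma slot_C u m x T : slot u m x T -> Forall (fun y => C y = u) T.
Proof. intros [c [hc [_ [[h ->]|[_ ->]]]]]; auto. Qed.

Lemma Step_tot w l : exists r, StepRel w l r.
Proof.
  destruct l as [u m]. simpl.
  destruct (classic (m = mone (M u))) as [Hm|Hm]; [eauto|].
  destruct (classic (exists p x s, FS u w p x s)) as [[p [x [s Hf]]]|Hn].
  - destruct (slot_ex u m x (proj1 (proj2 Hf))) as [T HT]. exists (p ++ T ++ s). right. left. split; auto. exists p, x, s, T. auto.
  - exists (w ++ [mkX u m Hm]). right. right. split; auto. split; eauto.
    intros p x s Hf. apply Hn. eauto.
Qed.

Lemma Step_det w l r r' : StepRel w l r -> StepRel w l r' -> r = r'.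
Proof.
  destruct l as [u m]. simpl.
  intros [[Hm ->]|[[Hm [p [x [s [T [Hf [HT ->]]]]]]]|[Hm [Hn [h ->]]]]]
         [[Hm' ->]|[[Hm' [p' [x' [s' [T' [Hf' [HT' ->]]]]]]]|[Hm' [Hn' [h' ->]]]]];
    try contradiction; auto.
  - destruct (FS_uniq _ _ _ _ _ _ _ _ Hf Hf') as [<- [<- <-]].
    rewrite (slot_det _ _ _ _ _ HT HT'). reflexivity.
  - exfalso. eapply Hn'; eauto.
  - exfalso. eapply Hn; eauto.
  - f_equal. f_equal. apply mkX_eq. reflexivity.
Qed.

Lemma Step_FS u m w p x s T : m <> mone (M u) -> FS u w p x s -> slot u m x T ->
  StepRel w (existT _ u m) (p ++ T ++ s).
Proof. intros. simpl. right. left. split; auto. exists p, x, s, T. auto. Qed.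

Lemma Step_app u m w h : noFS u w -> StepRel w (existT _ u m) (w ++ [mkX u m h]).
Proof. intros. simpl. right. right. split; auto. split; eauto. Qed.

Lemma Step_one u w : StepRel w (existT _ u (mone (M u))) w.
Proof. simpl. left. auto. Qed.

Lemma slot_shuf u m x T p s p' s' : slot u m x T -> shuf (p ++ s) (p' ++ s') ->
  (forall x', C x' = u -> shuf (p ++ x' :: s) (p' ++ x' :: s')) ->
  shuf (p ++ T ++ s) (p' ++ T ++ s').
Proof.
  intros [c [hc [_ [[h ->]|[_ ->]]]]] H1 H2; simpl; auto.
Qed.

Lemma Step_sw1 w1 w2 l r1 r2 : sw1 w1 w2 -> StepRel w1 l r1 -> StepRel w2 l r2 -> shuf r1 r2.
Proof.
  intros Hsw H1 H2. destruct l as [u m].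
  destruct H1 as [[Hm ->]|[[Hm [p [x [s [T [Hf [HT ->]]]]]]]|[Hm [Hn [h ->]]]]].
  - subst m. rewrite (Step_det _ _ _ _ H2 (Step_one u w2)). apply sw1_shuf. auto.
  - destruct (sw1_FS _ _ _ _ _ _ Hsw Hf) as [p' [s' [Hf' [S1 S2]]]].
    rewrite (Step_det _ _ _ _ H2 (Step_FS _ _ _ _ _ _ _ Hm Hf' HT)).
    eapply slot_shuf; eauto.
  - assert (Hn' : noFS u w2) by (eapply sw1_noFS; eauto).
    rewrite (Step_det _ _ _ _ H2 (Step_app _ _ _ h Hn')).
    apply sw1_shuf, sw1_app_r. auto.
Qed.

Lemma Step_shuf w1 w2 l r1 r2 : shuf w1 w2 -> StepRel w1 l r1 -> StepRel w2 l r2 -> shuf r1 r2.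
Proof.
  intros Hs. revert r1 r2. induction Hs; intros r1 r2 H1 H2.
  - rewrite (Step_det _ _ _ _ H1 H2). constructor.
  - destruct (Step_tot w2 l) as [r Hr]. eapply shuf_trans.
    + eapply Step_sw1; eauto.
    + eapply IHHs; eauto.
Qed.

Lemma noFS_finV u w : noFS u w <-> ~ finV u (map (@C V M) w).
Proof.
  rewrite <- FS_finV. split.
  - intros Hn [p [x [s Hf]]]. eapply Hn; eauto.
  - intros Hn p x s Hf. apply Hn. eauto.
Qed.

Lemma red_prefix (w1 w2 : word) : reduced E (w1 ++ w2) -> reduced E w1.
Proof. rewrite !reduced_badV, map_app. apply prefixV. Qed.

Lemma red_R5 (w : word) x : reduced E (w ++ [x]) -> noFS (C x) w.
Proof. rewrite reduced_badV, noFS_finV, map_app. apply R5V. Qed.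

Lemma red_R2 (w : word) x : reduced E w -> noFS (C x) w -> reduced E (w ++ [x]).
Proof. rewrite !reduced_badV, noFS_finV, map_app. apply R2V. Qed.

Lemma red_R4 (p : word) x s : reduced E (p ++ x :: s) -> Forall (fun y => E (C y) (C x)) s ->
  reduced E (p ++ s) /\ noFS (C x) (p ++ s).
Proof.
  rewrite !reduced_badV, noFS_finV, !map_app. simpl. intros H1 H2.
  apply R4V; auto. apply Forall_map. exact H2.
Qed.

Lemma red_repl (p : word) x x' s : reduced E (p ++ x :: s) -> C x' = C x -> reduced E (p ++ x' :: s).
Proof. rewrite !reduced_badV, !map_app. simpl. intros H ->. exact H. Qed.

Lemma Step_red (w : word) l r : reduced E w -> StepRel w l r -> reduced E r.
Proof.
  intros Hr. destruct l as [u m].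
  intros [[Hm ->]|[[Hm [p [x [s [T [Hf [HT ->]]]]]]]|[Hm [Hn [h ->]]]]]; auto.
  - destruct Hf as [-> [Hx Hs]]. destruct HT as [c [hc [Hxe [[h ->]|[_ ->]]]]].
    + simpl. eapply red_repl; eauto.
    + simpl. subst u. apply (red_R4 _ _ _ Hr Hs).
  - apply red_R2; auto.
Qed.

Notation L u m := (existT (fun v => mcarrier (M v)) u m).

Lemma slot_keep u m c hc h : slot u m (mkX u c hc) [mkX u (mmul c m) h].
Proof. exists c, hc. split; eauto. Qed.

Lemma slot_kill u m c hc : mmul c m = mone (M u) -> slot u m (mkX u c hc) [].
Proof. intros. exists c, hc. split; eauto. Qed.

Lemma FS_end u w x : C x = u -> FS u (w ++ [x]) w x [].
Proof. intros. split; auto. Qed.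

Lemma FS_here u p x s : C x = u -> Forall (fun y => E (C y) u) s -> FS u (p ++ x :: s) p x s.
Proof. intros. split; auto. Qed.

Lemma Law1 (w w1 w2 w3 : word) u m n : reduced E w ->
  StepRel w (L u m) w1 -> StepRel w1 (L u n) w2 -> StepRel w (L u (mmul m n)) w3 -> shuf w2 w3.
Proof.
  intros Hr H1 H2 H3.
  destruct (classic (m = mone (M u))) as [Hm|Hm].
  { subst m. rewrite (Step_det _ _ _ _ H1 (Step_one u w)) in H2. rewrite mmul1m in H3.
    rewrite (Step_det _ _ _ _ H2 H3). constructor. }
  destruct (classic (n = mone (M u))) as [Hn|Hn].
  { subst n. rewrite mmulm1 in H3. rewrite (Step_det _ _ _ _ H2 (Step_one u w1)).
    rewrite (Step_det _ _ _ _ H1 H3). constructor. }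
  destruct (classic (exists p x s, FS u w p x s)) as [[p [x [s Hf]]]|Hnf].
  - destruct x as [u' [c hc]]. assert (u' = u) by (destruct Hf as [_ [Hx _]]; exact Hx). subst u'.
    change (existT _ u (exist _ c hc)) with (mkX u c hc) in Hf.
    pose proof Hf as [Hw [_ Hs]].
    destruct (classic (mmul c m = mone (M u))) as [Hcm|Hcm].
    + rewrite (Step_det _ _ _ _ H1 (Step_FS _ _ _ _ _ _ _ Hm Hf (slot_kill u m c hc Hcm))) in H2.
      cbn [app] in H2.
      destruct (red_R4 p (mkX u c hc) s) as [Hr1 Hnf1]; [rewrite <- Hw; auto | exact Hs|].
      rewrite (Step_det _ _ _ _ H2 (Step_app u n (p ++ s) Hn Hnf1)).
      destruct (classic (mmul m n = mone (M u))) as [Hmn|Hmn].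
      * rewrite Hmn in H3. rewrite (Step_det _ _ _ _ H3 (Step_one u w)).
        assert (c = n) by (rewrite <- (mmulm1 c), <- Hmn, mmulA, Hcm, mmul1m; reflexivity).
        subst n. rewrite Hw. rewrite <- app_assoc. apply shuf_sym.
        replace (mkX u c Hn) with (mkX u c hc) by (apply mkX_eq; auto). apply move_right. exact Hs.
      * assert (Hcmn : mmul c (mmul m n) = n) by (rewrite mmulA, Hcm, mmul1m; reflexivity).
        assert (h' : mmul c (mmul m n) <> mone (M u)) by (rewrite Hcmn; exact Hn).
        rewrite (Step_det _ _ _ _ H3 (Step_FS _ _ _ _ _ _ _ Hmn Hf (slot_keep u (mmul m n) c hc h'))).
        simpl. rewrite <- app_assoc. simpl.
        replace (mkX u (mmul c (mmul m n)) h') with (mkX u n Hn) by (apply mkX_eq; auto).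
        apply shuf_sym. apply move_right. exact Hs.
    + rewrite (Step_det _ _ _ _ H1 (Step_FS _ _ _ _ _ _ _ Hm Hf (slot_keep u m c hc Hcm))) in H2.
      cbn [app] in H2.
      assert (Hf1 : FS u (p ++ mkX u (mmul c m) Hcm :: s) p (mkX u (mmul c m) Hcm) s)
        by (apply FS_here; auto).
      destruct (classic (mmul (mmul c m) n = mone (M u))) as [Hcmn|Hcmn].
      * rewrite (Step_det _ _ _ _ H2 (Step_FS _ _ _ _ _ _ _ Hn Hf1 (slot_kill u n _ Hcm Hcmn))). simpl.
        destruct (classic (mmul m n = mone (M u))) as [Hmn|Hmn].
        -- exfalso. apply hc. assert (Hc : c = mmul c (mmul m n)) by (rewrite Hmn, mmulm1; reflexivity).
           rewrite Hc, mmulA. exact Hcmn.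
        -- assert (Hk : mmul c (mmul m n) = mone (M u)) by (rewrite mmulA; exact Hcmn).
           rewrite (Step_det _ _ _ _ H3 (Step_FS _ _ _ _ _ _ _ Hmn Hf (slot_kill u _ c hc Hk))).
           constructor.
      * rewrite (Step_det _ _ _ _ H2 (Step_FS _ _ _ _ _ _ _ Hn Hf1 (slot_keep u n _ Hcm Hcmn))). simpl.
        destruct (classic (mmul m n = mone (M u))) as [Hmn|Hmn].
        -- rewrite Hmn in H3. rewrite (Step_det _ _ _ _ H3 (Step_one u w)). rewrite Hw.
           replace (mkX u (mmul (mmul c m) n) Hcmn) with (mkX u c hc). constructor.
           apply mkX_eq. rewrite <- mmulA, Hmn, mmulm1. reflexivity.
        -- assert (h' : mmul c (mmul m n) <> mone (M u)) by (rewrite mmulA; exact Hcmn).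
           rewrite (Step_det _ _ _ _ H3 (Step_FS _ _ _ _ _ _ _ Hmn Hf (slot_keep u _ c hc h'))). simpl.
           replace (mkX u (mmul (mmul c m) n) Hcmn) with (mkX u (mmul c (mmul m n)) h').
           constructor. apply mkX_eq. apply mmulA.
  - assert (Hnf' : noFS u w) by (intros p x s Hf; apply Hnf; eauto).
    rewrite (Step_det _ _ _ _ H1 (Step_app u m w Hm Hnf')) in H2.
    assert (Hf1 := FS_end u w (mkX u m Hm) eq_refl).
    destruct (classic (mmul m n = mone (M u))) as [Hmn|Hmn].
    + rewrite (Step_det _ _ _ _ H2 (Step_FS _ _ _ _ _ _ _ Hn Hf1 (slot_kill u n m Hm Hmn))).
      rewrite Hmn in H3. rewrite (Step_det _ _ _ _ H3 (Step_one u w)). simpl.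
      try rewrite app_nil_r. constructor.
    + rewrite (Step_det _ _ _ _ H2 (Step_FS _ _ _ _ _ _ _ Hn Hf1 (slot_keep u n m Hm Hmn))).
      rewrite (Step_det _ _ _ _ H3 (Step_app u _ w Hmn Hnf')). simpl.
      try rewrite app_nil_r. constructor.
Qed.

Lemma noFS_snoc u (w : word) x : noFS u w -> C x <> u -> noFS u (w ++ [x]).
Proof.
  intros Hn Hx P y S [Heq [Hy HS]].
  destruct S as [|z S' _] using rev_ind.
  - apply app_inj_tail in Heq as [_ ->]. auto.
  - assert (Heq' : w ++ [x] = (P ++ y :: S') ++ [z]) by (rewrite Heq, <- app_assoc; reflexivity).
    apply app_inj_tail in Heq' as [-> _]. apply (Hn P y S').
    split; auto. split; auto. apply Forall_app in HS. tauto.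
Qed.

Lemma FS_snoc u (w : word) p x s z : FS u w p x s -> E (C z) u -> FS u (w ++ [z]) p x (s ++ [z]).
Proof.
  intros [-> [Hx Hs]] Hz. split; [rewrite <- app_assoc; reflexivity|]. split; auto.
  apply Forall_app. auto.
Qed.

Lemma two_pos u u' (w p : word) x s P y S : u <> u' -> FS u w p x s -> FS u' w P y S ->
  (exists l', s = l' ++ y :: S /\ P = p ++ x :: l') \/
  (exists l', p = P ++ y :: l' /\ S = l' ++ x :: s).
Proof.
  intros Hu [-> [Hx _]] [Heq [Hy _]].
  apply app_eq_app in Heq as [l [[Hp Hl]|[Hp Hl]]].
  - destruct l as [|z l'].
    + simpl in Hl. injection Hl as -> _. congruence.
    + simpl in Hl. injection Hl as -> ->. right. eauto.
  - destruct l as [|z l'].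
    + simpl in Hl. injection Hl as -> _. congruence.
    + simpl in Hl. injection Hl as -> ->. left. eauto.
Qed.

Lemma noFS_repl u u' (w p : word) x s T : E u u' -> FS u w p x s -> noFS u' w ->
  Forall (fun z => C z = u) T -> noFS u' (p ++ T ++ s).
Proof.
  intros Huu [-> [Hx Hs]] Hn HT P y S [Heq [Hy HS]].
  assert (Hne : u <> u') by (intro He; rewrite He in Huu; exact (E_irr _ Huu)).
  apply app_eq_app in Heq as [l [[Hp Hl]|[Hp Hl]]].
  - destruct l as [|z l'].
    + simpl in Hl. rewrite app_nil_r in Hp. subst P. destruct T as [|t T'].
      * simpl in Hl. subst s. apply (Hn (p ++ [x]) y S). split; [rewrite <- app_assoc; reflexivity|]. auto.
      * simpl in Hl. injection Hl as <- _. inversion HT; subst. congruence.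
    + simpl in Hl. injection Hl as <- ->. subst p.
      apply (Hn P y (l' ++ x :: s)). split; [rewrite <- app_assoc; reflexivity|]. split; auto.
      apply Forall_app in HS as [H1 H2]. apply Forall_app in H2 as [_ H3].
      apply Forall_app. split; auto. constructor; auto. rewrite Hx. auto.
  - apply app_eq_app in Hl as [l2 [[HT2 Hl2]|[HT2 Hl2]]].
    + destruct l2 as [|z l3].
      * simpl in Hl2. subst s. apply (Hn (p ++ [x]) y S). split; [rewrite <- app_assoc; reflexivity|]. auto.
      * simpl in Hl2. injection Hl2 as <- _. subst T. rewrite Forall_forall in HT.
        apply Hne. rewrite <- Hy. symmetry. apply HT. apply in_or_app. simpl. auto.
    + subst s. apply (Hn (p ++ x :: l2) y S). split; [rewrite <- app_assoc; reflexivity|]. auto.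
Qed.

Lemma Step_inv_FS (w p : word) x s u m r : m <> mone (M u) -> FS u w p x s ->
  StepRel w (L u m) r -> exists T, slot u m x T /\ r = p ++ T ++ s.
Proof.
  intros Hm Hf H. destruct (slot_ex u m x (proj1 (proj2 Hf))) as [T HT].
  exists T. split; auto. exact (Step_det _ _ _ _ H (Step_FS _ _ _ _ _ _ _ Hm Hf HT)).
Qed.

Lemma Step_inv_app (w : word) u m r (Hm : m <> mone (M u)) : noFS u w ->
  StepRel w (L u m) r -> r = w ++ [mkX u m Hm].
Proof. intros Hn H. exact (Step_det _ _ _ _ H (Step_app _ _ _ Hm Hn)). Qed.

Lemma slot_adj u u' n y T : slot u' n y T -> E u' u -> Forall (fun z => E (C z) u) T.
Proof.
  intros HT He. apply slot_C in HT. eapply Forall_impl; [|exact HT]. simpl. intros a ->. auto.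
Qed.

Ltac assoc := repeat (rewrite <- app_assoc; simpl); try reflexivity.

Lemma Law2 (w w1 w2 w3 w4 : word) u u' m n : E u u' ->
  StepRel w (L u m) w1 -> StepRel w1 (L u' n) w2 ->
  StepRel w (L u' n) w3 -> StepRel w3 (L u m) w4 -> shuf w2 w4.
Proof.
  intros Huu H1 H2 H3 H4.
  assert (Hne : u <> u') by (intro He; rewrite He in Huu; exact (E_irr _ Huu)).
  destruct (classic (m = mone (M u))) as [Hm|Hm].
  { subst m. rewrite (Step_det _ _ _ _ H1 (Step_one u w)) in H2.
    rewrite (Step_det _ _ _ _ H4 (Step_one u w3)). rewrite (Step_det _ _ _ _ H2 H3). constructor. }
  destruct (classic (n = mone (M u'))) as [Hn|Hn].
  { subst n. rewrite (Step_det _ _ _ _ H3 (Step_one u' w)) in H4.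
    rewrite (Step_det _ _ _ _ H2 (Step_one u' w1)). rewrite (Step_det _ _ _ _ H1 H4). constructor. }
  destruct (classic (exists p x s, FS u w p x s)) as [[p [x [s Hf]]]|Hnf];
  destruct (classic (exists P y S, FS u' w P y S)) as [[P [y [S Hf']]]|Hnf'].
  - pose proof Hf as [Hw [Hx Hs]]. pose proof Hf' as [Hw' [Hy HS]].
    destruct (two_pos u u' w p x s P y S Hne Hf Hf') as [[l' [-> ->]]|[l' [-> ->]]].
    + destruct (Step_inv_FS _ _ _ _ _ _ _ Hm Hf H1) as [T1 [HT1 ->]].
      assert (Hf1 : FS u' (p ++ T1 ++ l' ++ y :: S) (p ++ T1 ++ l') y S) by (split; [assoc|auto]).
      destruct (Step_inv_FS _ _ _ _ _ _ _ Hn Hf1 H2) as [T2 [HT2 ->]].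
      destruct (Step_inv_FS _ _ _ _ _ _ _ Hn Hf' H3) as [T2' [HT2' ->]].
      rewrite (slot_det _ _ _ _ _ HT2' HT2) in *.
      assert (Hf3 : FS u ((p ++ x :: l') ++ T2 ++ S) p x (l' ++ T2 ++ S)).
      { split; [assoc|]. split; auto. apply Forall_app in Hs as [Hl HyS].
        inversion HyS; subst. apply Forall_app. split; auto. apply Forall_app. split; auto.
        eapply slot_adj; eauto. }
      destruct (Step_inv_FS _ _ _ _ _ _ _ Hm Hf3 H4) as [T1' [HT1' ->]].
      rewrite (slot_det _ _ _ _ _ HT1' HT1). assoc. constructor.
    + destruct (Step_inv_FS _ _ _ _ _ _ _ Hm Hf H1) as [T1 [HT1 ->]].
      assert (Hf1 : FS u' ((P ++ y :: l') ++ T1 ++ s) P y (l' ++ T1 ++ s)).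
      { split; [assoc|]. split; auto. apply Forall_app in HS as [Hl HxS].
        inversion HxS; subst. apply Forall_app. split; auto. apply Forall_app. split; auto.
        eapply slot_adj; eauto. }
      destruct (Step_inv_FS _ _ _ _ _ _ _ Hn Hf1 H2) as [T2 [HT2 ->]].
      destruct (Step_inv_FS _ _ _ _ _ _ _ Hn Hf' H3) as [T2' [HT2' ->]].
      rewrite (slot_det _ _ _ _ _ HT2' HT2) in *.
      assert (Hf3 : FS u (P ++ T2 ++ l' ++ x :: s) (P ++ T2 ++ l') x s) by (split; [assoc|auto]).
      destruct (Step_inv_FS _ _ _ _ _ _ _ Hm Hf3 H4) as [T1' [HT1' ->]].
      rewrite (slot_det _ _ _ _ _ HT1' HT1). assoc. constructor.
  - assert (Hn' : noFS u' w) by (intros P y S Hf'; apply Hnf'; eauto).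
    destruct (Step_inv_FS _ _ _ _ _ _ _ Hm Hf H1) as [T1 [HT1 ->]].
    assert (Hn1 : noFS u' (p ++ T1 ++ s)) by (eapply noFS_repl; eauto using slot_C).
    rewrite (Step_inv_app _ _ _ _ Hn Hn1 H2).
    rewrite (Step_inv_app _ _ _ _ Hn Hn' H3) in H4.
    assert (Hf3 : FS u (w ++ [mkX u' n Hn]) p x (s ++ [mkX u' n Hn])) by (apply FS_snoc; auto).
    destruct (Step_inv_FS _ _ _ _ _ _ _ Hm Hf3 H4) as [T1' [HT1' ->]].
    rewrite (slot_det _ _ _ _ _ HT1' HT1). assoc. constructor.
  - assert (Hn0 : noFS u w) by (intros p x s Hf; apply Hnf; eauto).
    rewrite (Step_inv_app _ _ _ _ Hm Hn0 H1) in H2.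
    destruct (Step_inv_FS _ _ _ _ _ _ _ Hn Hf' H3) as [T2 [HT2 ->]].
    assert (Hf1 : FS u' (w ++ [mkX u m Hm]) P y (S ++ [mkX u m Hm])) by (apply FS_snoc; auto).
    destruct (Step_inv_FS _ _ _ _ _ _ _ Hn Hf1 H2) as [T2' [HT2' ->]].
    rewrite (slot_det _ _ _ _ _ HT2' HT2).
    assert (Hn3 : noFS u (P ++ T2 ++ S)) by (eapply noFS_repl; eauto using slot_C).
    rewrite (Step_inv_app _ _ _ _ Hm Hn3 H4). assoc. constructor.
  - assert (Hn0 : noFS u w) by (intros p x s Hf; apply Hnf; eauto).
    assert (Hn' : noFS u' w) by (intros P y S Hf'; apply Hnf'; eauto).
    rewrite (Step_inv_app _ _ _ _ Hm Hn0 H1) in H2.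
    rewrite (Step_inv_app _ _ _ _ Hn Hn' H3) in H4.
    assert (Hn1 : noFS u' (w ++ [mkX u m Hm])) by (apply noFS_snoc; auto).
    assert (Hn3 : noFS u (w ++ [mkX u' n Hn])) by (apply noFS_snoc; auto).
    rewrite (Step_inv_app _ _ _ _ Hn Hn1 H2). rewrite (Step_inv_app _ _ _ _ Hm Hn3 H4).
    rewrite <- !app_assoc. apply sw1_shuf. constructor. auto.
Qed.

Lemma gc_step (w1 w2 p l r s : list (letter M)) : gp_rel E l r -> w1 = p ++ l ++ s -> w2 = p ++ r ++ s ->
  gp_cong E w1 w2.
Proof. intros H -> ->. apply gp_cong_step. exact H. Qed.

Lemma gc_app_r (w1 w2 t : list (letter M)) : gp_cong E w1 w2 -> gp_cong E (w1 ++ t) (w2 ++ t).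
Proof.
  induction 1.
  - apply (gc_step _ _ p l r (s ++ t) H); rewrite <- !app_assoc; reflexivity.
  - apply gp_cong_refl.
  - apply gp_cong_sym. auto.
  - eapply gp_cong_trans; eauto.
Qed.

Lemma gp_move (P : list (letter M)) u a (S : word) Tl : Forall (fun y => E u (C y)) S ->
  gp_cong E (P ++ L u a :: map (@X_letter V M) S ++ Tl) (P ++ map (@X_letter V M) S ++ L u a :: Tl).
Proof.
  revert P. induction S as [|y S IH]; intros P HS.
  - apply gp_cong_refl.
  - inversion HS; subst. eapply gp_cong_trans.
    + apply (gc_step _ _ P _ _ (map (@X_letter V M) S ++ Tl)
              (gp_rel_comm (E:=E) a (proj1_sig (projT2 y)) H1)); reflexivity.
    + simpl. specialize (IH (P ++ [X_letter y]) H2). rewrite <- !app_assoc in IH. exact IH.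
Qed.

Lemma Step_eval (r r' : word) l : StepRel r l r' ->
  gp_cong E (map (@X_letter V M) r') (map (@X_letter V M) r ++ [l]).
Proof.
  destruct l as [u m].
  intros [[Hm ->]|[[Hm [p [x [s [T [Hf [HT ->]]]]]]]|[Hm [Hn [h ->]]]]].
  - subst m. apply gp_cong_sym.
    apply (gc_step _ _ (map (@X_letter V M) r) _ _ [] (gp_rel_one E M u)); rewrite ?app_nil_r; reflexivity.
  - destruct Hf as [-> [Hx Hs]]. destruct HT as [c [hc [-> HT]]].
    assert (Hs' : Forall (fun y => E u (C y)) s).
    { eapply Forall_impl; [|exact Hs]. simpl. auto. }
    apply gp_cong_sym. rewrite !map_app. simpl. rewrite <- app_assoc. simpl.
    eapply gp_cong_trans. { apply (gp_move _ u c s [L u m]). exact Hs'. }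
    destruct HT as [[h ->]|[Hcm ->]].
    + eapply gp_cong_trans.
      * apply (gc_step _ _ (map (@X_letter V M) p ++ map (@X_letter V M) s) _ _ [] (gp_rel_mul E c m)).
        -- rewrite <- !app_assoc. reflexivity.
        -- reflexivity.
      * rewrite <- !app_assoc. simpl. apply gp_cong_sym.
        pose proof (gp_move (map (@X_letter V M) p) u (mmul c m) s [] Hs') as G.
        rewrite app_nil_r in G. exact G.
    + eapply gp_cong_trans.
      * apply (gc_step _ _ (map (@X_letter V M) p ++ map (@X_letter V M) s) _ _ [] (gp_rel_mul E c m)).
        -- rewrite <- !app_assoc. reflexivity.
        -- reflexivity.
      * rewrite Hcm.
        apply (gc_step _ _ (map (@X_letter V M) p ++ map (@X_letter V M) s) _ _ [] (gp_rel_one E M u)).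
        -- reflexivity.
        -- simpl. rewrite !app_nil_r. reflexivity.
  - rewrite map_app. apply gp_cong_refl.
Qed.

Definition act (l : letter M) (P : word -> Prop) : word -> Prop :=
  fun w'' => exists w w', reduced E w /\ P = shuf w /\ StepRel w l w' /\ shuf w' w''.

Lemma shuf_ext a b : shuf a b -> shuf a = shuf b.
Proof.
  intro H. apply functional_extensionality. intro x. apply propositional_extensionality.
  split; intro H'. - eapply shuf_trans; [apply shuf_sym|]; eauto. - eapply shuf_trans; eauto.
Qed.

Lemma shuf_ext_inv a b : shuf a = shuf b -> shuf a b.
Proof. intro H. rewrite H. constructor. Qed.

Lemma act_class (w w' : word) l : reduced E w -> StepRel w l w' -> act l (shuf w) = shuf w'.
Proof.
  intros Hr Hs. apply functional_extensionality. intro x. apply propositional_extensionality.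
  split.
  - intros [w0 [w0' [Hr0 [Heq [Hs0 Hsh]]]]].
    apply shuf_ext_inv in Heq. eapply shuf_trans; [|exact Hsh].
    exact (Step_shuf _ _ _ _ _ Heq Hs Hs0).
  - intro H. exists w, w'. repeat split; auto.
Qed.

Inductive Steps : word -> list (letter M) -> word -> Prop :=
| st_nil w : Steps w [] w
| st_cons w l ls w1 w2 : StepRel w l w1 -> Steps w1 ls w2 -> Steps w (l :: ls) w2.

Definition actL (ls : list (letter M)) (P : word -> Prop) := fold_left (fun P l => act l P) ls P.

Lemma fold_class ls (r : word) : reduced E r ->
  exists r', reduced E r' /\ Steps r ls r' /\ actL ls (shuf r) = shuf r'.
Proof.
  revert r. induction ls as [|l ls IH]; intros r Hr.
  - exists r. repeat split; auto. constructor.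
  - destruct (Step_tot r l) as [r1 H1].
    destruct (IH r1 (Step_red _ _ _ Hr H1)) as [r' [Hr' [Hst Heq]]].
    exists r'. split; auto. split. { econstructor; eauto. }
    unfold actL. simpl. rewrite (act_class _ _ _ Hr H1). exact Heq.
Qed.

Lemma Steps_0 (r a : word) : Steps r [] a -> a = r.
Proof. intro H. inversion H. reflexivity. Qed.

Lemma Steps_1 (r a : word) l : Steps r [l] a -> StepRel r l a.
Proof. intro H. inversion H; subst. apply Steps_0 in H5. subst. auto. Qed.

Lemma Steps_2 (r a : word) l1 l2 : Steps r [l1; l2] a -> exists w1, StepRel r l1 w1 /\ StepRel w1 l2 a.
Proof. intro H. inversion H; subst. apply Steps_1 in H5. eauto. Qed.

Lemma rel_steps l0 r0 (r a b : word) : gp_rel E l0 r0 -> reduced E r ->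
  Steps r l0 a -> Steps r r0 b -> shuf a b.
Proof.
  intros Hrel Hr Ha Hb. destruct Hrel.
  - apply Steps_1 in Ha. apply Steps_0 in Hb. subst.
    rewrite (Step_det _ _ _ _ Ha (Step_one _ _)). constructor.
  - apply Steps_2 in Ha as [w1 [H1 H2]]. apply Steps_1 in Hb. exact (Law1 r w1 a b v m n Hr H1 H2 Hb).
  - apply Steps_2 in Ha as [w1 [H1 H2]]. apply Steps_2 in Hb as [w3 [H3 H4]].
    exact (Law2 r w1 a w3 b u v m n H H1 H2 H3 H4).
Qed.

Definition nf (ls : list (letter M)) := actL ls (shuf []).

Lemma red_nil : reduced E (@nil Xt).
Proof. intros p x q y r H. destruct p; discriminate. Qed.

Lemma nf_reach ls : exists r, reduced E r /\ nf ls = shuf r /\ gp_cong E (map (@X_letter V M) r) ls.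
Proof.
  induction ls as [|l ls IH] using rev_ind.
  - exists []. split; [apply red_nil|]. split; [reflexivity|]. apply gp_cong_refl.
  - destruct IH as [r [Hr [Heq Hg]]].
    destruct (Step_tot r l) as [r1 H1]. exists r1. split; [eapply Step_red; eauto|]. split.
    + unfold nf, actL. rewrite fold_left_app. simpl. fold (actL ls (shuf [])). fold (nf ls).
      rewrite Heq. apply act_class; auto.
    + eapply gp_cong_trans; [apply Step_eval; eauto|]. apply gc_app_r. exact Hg.
Qed.

Lemma nf_cong l1 l2 : gp_cong E l1 l2 -> nf l1 = nf l2.
Proof.
  induction 1.
  - unfold nf, actL. rewrite !fold_left_app.
    fold (actL p (shuf [])). fold (nf p).
    destruct (nf_reach p) as [r0 [Hr0 [-> _]]].
    fold (actL l (shuf r0)). fold (actL r (shuf r0)).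
    destruct (fold_class l r0 Hr0) as [a [_ [Ha ->]]].
    destruct (fold_class r r0 Hr0) as [b [_ [Hb ->]]].
    rewrite (shuf_ext _ _ (rel_steps _ _ _ _ _ H Hr0 Ha Hb)). reflexivity.
  - reflexivity.
  - auto.
  - congruence.
Qed.

Lemma nf_reduced (W : word) : reduced E W -> nf (map (@X_letter V M) W) = shuf W.
Proof.
  induction W as [|x W IH] using rev_ind; intro Hr.
  - reflexivity.
  - rewrite map_app. unfold nf, actL. rewrite fold_left_app. simpl.
    fold (actL (map (@X_letter V M) W) (shuf [])). fold (nf (map (@X_letter V M) W)).
    rewrite IH by (eapply red_prefix; eauto).
    apply act_class; [eapply red_prefix; eauto|].
    pose proof (red_R5 _ _ Hr) as Hn.
    destruct x as [u [m h]]. apply (Step_app u m W h Hn).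
Qed.

Lemma class_eq (w1 w2 : list (letter M)) : gp_cong E w1 w2 -> gp_class E w1 = gp_class E w2.
Proof.
  intro H. unfold gp_class. apply subset_eq_compat.
  apply functional_extensionality. intro x. apply propositional_extensionality.
  split; intro H'.
  - eapply gp_cong_trans; [apply gp_cong_sym|]; eauto.
  - eapply gp_cong_trans; eauto.
Qed.

Lemma eval_cong (W1 W2 : word) : gp_cong E (map (@X_letter V M) W1) (map (@X_letter V M) W2) ->
  eval E W1 = eval E W2.
Proof. apply class_eq. Qed.

Lemma eval_inv (W1 W2 : word) : eval E W1 = eval E W2 ->
  gp_cong E (map (@X_letter V M) W1) (map (@X_letter V M) W2).
Proof.
  intro H. apply (f_equal (@proj1_sig _ _)) in H. simpl in H. rewrite H. apply gp_cong_refl.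
Qed.

Lemma eval_shuf (W1 W2 : word) : shuf W1 W2 -> eval E W1 = eval E W2.
Proof.
  induction 1. reflexivity. rewrite <- IHshuf. apply eval_cong.
  destruct H as [a y z b Hyz]. rewrite !map_app. simpl.
  apply (gc_step _ _ (map (@X_letter V M) a) _ _ (map (@X_letter V M) b)
     (gp_rel_comm (E:=E) (proj1_sig (projT2 y)) (proj1_sig (projT2 z)) Hyz)); reflexivity.
Qed.

Definition FinalRel v (W : word) (c : M v) (a' : GP E M) :=
  (exists p s h, FS v W p (mkX v c h) s /\ a' = eval E (p ++ s)) \/
  (c = mone (M v) /\ a' = eval E W /\ noFS v W).

Lemma FinalRel_shuf v (W1 W2 : word) c a' : shuf W1 W2 -> FinalRel v W1 c a' -> FinalRel v W2 c a'.
Proof.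
  induction 1 as [|w1 w2 w3 Hsw Hs IH]; auto. intro H. apply IH. clear IH Hs.
  destruct H as [[p [s [h [Hf ->]]]]|[Hc [-> Hn]]].
  - destruct (sw1_FS _ _ _ _ _ _ Hsw Hf) as [p' [s' [Hf' [S1 _]]]].
    left. exists p', s', h. split; auto. apply eval_shuf. auto.
  - right. split; auto. split. apply eval_shuf. apply sw1_shuf. auto. eapply sw1_noFS; eauto.
Qed.

Lemma FinalRel_det v (W : word) c c' a' a'' : FinalRel v W c a' -> FinalRel v W c' a'' ->
  c = c' /\ a' = a''.
Proof.
  intros [[p [s [h [Hf ->]]]]|[Hc [-> Hn]]] [[p' [s' [h' [Hf' ->]]]]|[Hc' [-> Hn']]].
  - destruct (FS_uniq _ _ _ _ _ _ _ _ Hf Hf') as [<- [Hx <-]]. apply mkX_inj in Hx. auto.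
  - exfalso. eapply Hn'; eauto.
  - exfalso. eapply Hn; eauto.
  - split; congruence.
Qed.

Lemma last_occ (P : Xt -> Prop) (r : word) : (exists x, In x r /\ P x) ->
  exists p y s, r = p ++ y :: s /\ P y /\ Forall (fun z => ~ P z) s.
Proof.
  induction r as [|x r IH] using rev_ind; intros [z [Hz Pz]].
  - destruct Hz.
  - destruct (classic (P x)) as [Px|nPx].
    + exists r, x, []. auto.
    + apply in_app_or in Hz as [Hz|[<-|[]]]; [|contradiction].
      destruct (IH (ex_intro _ z (conj Hz Pz))) as [p [y [s [-> [Py Hs]]]]].
      exists p, y, (s ++ [x]). split; [rewrite <- app_assoc; reflexivity|]. split; auto.
      apply Forall_app. auto.
Qed.

Lemma final_rel v (a : GP E M) c a' : @final V E M v a c a' ->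
  exists W, reduced E W /\ eval E W = a /\ FinalRel v W c a'.
Proof.
  intros [[h [w [Hred [Hev Ha']]]]|[Hc [Ha' [w [Hred [Hev Hcase]]]]]].
  - exists (w ++ [mkX v c h]). split; auto. split; auto. left.
    exists w, [], h. split. { apply FS_end. reflexivity. } rewrite app_nil_r. auto.
  - exists w. split; auto. split; auto. right. split; auto. split; [congruence|].
    intros P x S [Heq [Hx HS]]. destruct Hcase as [Hall|[p [z [s [-> [Hz Hzs]]]]]].
    + apply (Hall x); auto. rewrite Heq. apply in_or_app. simpl. auto.
    + apply app_eq_app in Heq as [l [[Hp Hl]|[Hp Hl]]].
      * destruct l as [|y l'].
        -- simpl in Hl. injection Hl as <- _. apply (Hzs x); simpl; auto.
        -- simpl in Hl. injection Hl as <- ->. rewrite Forall_forall in HS. apply Hz.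
           apply HS. apply in_or_app. simpl. auto.
      * apply (Hzs x); auto. rewrite Hl. apply in_or_app. simpl. auto.
Qed.

Lemma final_ex v (a : GP E M) : exists c a', @final V E M v a c a'.
Proof.
  destruct a as [Pa [ls Hls]].
  destruct (nf_reach ls) as [r [Hr [_ Hg]]].
  assert (Ha : eval E r = exist _ Pa (ex_intro _ ls Hls)).
  { unfold eval. rewrite (class_eq _ _ Hg). unfold gp_class. apply subset_eq_compat. auto. }
  destruct (classic (exists p x s, FS v r p x s)) as [[p [x [s Hf]]]|Hnf].
  - destruct x as [u [c hc]]. assert (u = v) by (destruct Hf as [_ [Hx _]]; exact Hx). subst u.
    change (existT _ v (exist _ c hc)) with (mkX v c hc) in Hf.
    pose proof Hf as [Hw [_ Hs]].
    destruct (red_R4 p (mkX v c hc) s) as [Hr1 Hnf1]; [rewrite <- Hw; auto | exact Hs|].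
    exists c, (eval E (p ++ s)). left. exists hc, (p ++ s). split; [|split].
    + apply red_R2; auto.
    + rewrite <- Ha. apply eval_shuf. rewrite Hw. rewrite <- app_assoc. apply shuf_sym.
      apply move_right. exact Hs.
    + reflexivity.
  - exists (mone (M v)), (eval E r). right. split; auto. rewrite Ha. split; auto.
    exists r. split; auto. split; auto.
    destruct (classic (exists x, In x r /\ C x = v)) as [Hex|Hno].
    + destruct (last_occ _ _ Hex) as [p [y [s [Hr' [Hy Hs]]]]].
      assert (Hz : exists z, In z s /\ ~ E (C z) v).
      { apply NNPP. intro Hc. apply Hnf. exists p, y, s. split; auto. split; auto.
        rewrite Forall_forall. intros z Hz. apply NNPP. intro. apply Hc. eauto. }
      destruct Hz as [z [Hz Hnz]]. apply in_split in Hz as [s1 [s2 ->]].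
      right. exists (p ++ y :: s1), z, s2. split; [rewrite Hr'; rewrite <- app_assoc; reflexivity|].
      split; auto. intros x Hx. rewrite Forall_forall in Hs. apply Hs. apply in_or_app. right. exact Hx.
    + left. intros x Hx Hc. apply Hno. eauto.
Qed.

Lemma final_unique v (a : GP E M) c a' c' a'' : @final V E M v a c a' -> @final V E M v a c' a'' ->
  c = c' /\ a' = a''.
Proof.
  intros H1 H2. destruct (final_rel _ _ _ _ H1) as [W1 [Hr1 [He1 F1]]].
  destruct (final_rel _ _ _ _ H2) as [W2 [Hr2 [He2 F2]]].
  rewrite <- He2 in He1. apply eval_inv, nf_cong in He1.
  rewrite !nf_reduced in He1 by auto. apply shuf_ext_inv in He1.
  apply (FinalRel_shuf _ _ _ _ _ He1) in F1. eapply FinalRel_det; eauto.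
Qed.

Lemma main_sec v (a : GP E M) :
  (exists! c : M v, exists a' : GP E M, @final V E M v a c a') /\
  (exists! a' : GP E M, exists c : M v, @final V E M v a c a').
Proof.
  destruct (final_ex v a) as [c [a' Hf]]. split.
  - exists c. split; eauto. intros c' [a'' Hf']. apply (final_unique _ _ _ _ _ _ Hf Hf').
  - exists a'. split; eauto. intros a'' [c' Hf']. apply (final_unique _ _ _ _ _ _ Hf Hf').
Qed.

End Dev.

Theorem proposition1p3 (V : Type) (E : V -> V -> Prop)
  (E_sym : forall u v, E u v -> E v u) (E_irr : forall v, ~ E v v)
  (M : V -> monoid) (v : V) (a : GP E M) :
  (exists! c : M v, exists a' : GP E M, @final V E M v a c a') /\
  (exists! a' : GP E M, exists c : M v, @final V E M v a c a').
Proof. exact (main_sec V E M E_sym E_irr v a). Qed.
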